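(* Let $\mathcal{G}=(V,E_1,\dots,E_\tau)$ be a temporal graph with $E_1=E_2=\dots=E_\tau=:E$, and let $k\in\mathbb{N}_0$ with $\tau\ge k$. Then $(\mathcal{G},k,0)$ is a yes-instance of MinTimeline$_\infty$ (equivalently, of MinTimeline$_+$) if and only if the graph $G=(V,E)$ admits a $(\tau{:}\tau-k)$-coloring.
   Context: A temporal graph $\mathcal{G}=(V,(E_i)_{i\in[\tau]})$ consists of a finite vertex set $V$ and edge sets $E_1,\dots,E_\tau\subseteq\binom{V}{2}$. A $k$-activity timeline is a set $\mathcal{T}\subseteq\{(v,a,b)\in V\times[\tau]\times[\tau]\mid a\le b\}$ with at most $k$ triples $(v,\cdot,\cdot)$ for each $v\in V$; it covers $\mathcal{G}$ if for every $t\in[\tau]$ and $\{u,v\}\in E_t$ there is $(u,a,b)\in\mathcal{T}$ or $(v,a,b)\in\mathcal{T}$ with $a\le t\le b$. MinTimeline$_\infty$: given $(\mathcal{G},k,\ell)$, decide whether there is a $k$-activity timeline covering $\mathcal{G}$ with $\max_{(v,a,b)\in\mathcal{T}}(b-a)\le\ell$; MinTimeline$_+$: same with $\sum_{(v,a,b)\in\mathcal{T}}(b-a)\le\ell$. For a graph $G=(V,E)$ and integers $a\ge b\ge 0$, an $(a{:}b)$-coloring of $G$ is a function $c\colon V\to\binom{[a]}{b}$ (assigning each vertex a $b$-element subset of $[a]$) with $c(u)\cap c(v)=\emptyset$ for all $\{u,v\}\in E$. *)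

(* Defs.v *)
From mathcomp Require Import all_boot.
Set Implicit Arguments. Unset Strict Implicit. Unset Printing Implicit Defensive.

(* A temporal graph (V, (E_t)_{t in [tau]}): V a finType, Es t : rel V the
   edge set at time t (only t in 1..tau is relevant). Time stamps in [tau]
   = {1,..,tau} are represented by elements of 'I_tau.+1 with value >= 1. *)

Definition triple (V : finType) (tau : nat) := (V * 'I_tau.+1 * 'I_tau.+1)%type.

Definition tr_v {V : finType} {tau : nat} (x : triple V tau) : V := x.1.1.
Definition tr_a {V : finType} {tau : nat} (x : triple V tau) : nat := x.1.2.
Definition tr_b {V : finType} {tau : nat} (x : triple V tau) : nat := x.2.

Definition activity_timeline (V : finType) (tau k : nat)
  (T : {set triple V tau}) : Prop :=
  (forall x, x \in T -> 0 < tr_a x /\ tr_a x <= tr_b x) /\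
  (forall v : V, #|[set x in T | tr_v x == v]| <= k).

Definition covers (V : finType) (tau : nat) (Es : nat -> rel V)
  (T : {set triple V tau}) : Prop :=
  forall t, 1 <= t <= tau -> forall u v : V, Es t u v ->
    exists2 x, x \in T & (tr_v x = u \/ tr_v x = v) /\ tr_a x <= t <= tr_b x.

Definition MinTimelineInf (V : finType) (tau : nat) (Es : nat -> rel V)
  (k l : nat) : Prop :=
  exists T : {set triple V tau},
    [/\ activity_timeline k T, covers Es T &
        forall x, x \in T -> tr_b x - tr_a x <= l].

Definition MinTimelinePlus (V : finType) (tau : nat) (Es : nat -> rel V)
  (k l : nat) : Prop :=
  exists T : {set triple V tau},
    [/\ activity_timeline k T, covers Es T &
        \sum_(x in T) (tr_b x - tr_a x) <= l].

Definition ab_coloring (V : finType) (E : rel V) (a b : nat)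
  (c : V -> {set 'I_a}) : Prop :=
  (forall v, #|c v| = b) /\
  (forall u v, E u v -> [disjoint c u & c v]).

Definition ab_colorable (V : finType) (E : rel V) (a b : nat) : Prop :=
  exists c : V -> {set 'I_a}, ab_coloring E b c.

(* Main.v *)
Require Import Defs.
From mathcomp Require Import all_boot.
From mathcomp Require Import zify.

Set Implicit Arguments. Unset Strict Implicit.

Section S.
Variables (V : finType) (E : rel V) (Es : nat -> rel V) (tau k : nat).
Hypothesis HEs : forall t, 1 <= t <= tau -> Es t = E.
Hypothesis Hk : k <= tau.

Definition P0 := exists T : {set triple V tau},
  [/\ activity_timeline k T, covers Es T & forall x, x \in T -> tr_a x = tr_b x].

Definition mkT (w : V) (i : 'I_tau) : triple V tau :=
  (w, inord i.+1, inord i.+1).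

Lemma mkT_a w (i : 'I_tau) : tr_a (mkT w i) = i.+1.
Proof. by rewrite /tr_a /= inordK // ltnS ltn_ord. Qed.
Lemma mkT_b w (i : 'I_tau) : tr_b (mkT w i) = i.+1.
Proof. by rewrite /tr_b /= inordK // ltnS ltn_ord. Qed.

Lemma col_P0 : ab_colorable E tau (tau - k) -> P0.
Proof.
move=> [c [Hc Hd]].
pose T := [set x : triple V tau | [exists i : 'I_tau,
  (x == mkT (tr_v x) i) && (i \notin c (tr_v x))]].
exists T; split.
- split.
  + move=> x; rewrite inE => /existsP [i /andP [/eqP -> _]].
    by rewrite mkT_a mkT_b.
  + move=> v.
    apply: (@leq_trans #|mkT v @: ~: c v|); last first.
      apply: (leq_trans (leq_imset_card _ _)).
      rewrite cardsCs setCK card_ord Hc; lia.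
    apply: subset_leq_card; apply/subsetP => x; rewrite !inE.
    move=> /andP [/existsP [i /andP [/eqP Hx Hi]] /eqP Hv].
    apply/imsetP; exists i; first by rewrite inE -Hv.
    by rewrite -Hv.
- move=> t /andP [t1 t2] u v; rewrite HEs ?t1 ?t2 // => Huv.
  have ht : t.-1 < tau by lia.
  pose i := Ordinal ht.
  have Hdis := Hd _ _ Huv.
  have [iu|iu] := boolP (i \in c u).
    have iv : i \notin c v.
      by rewrite (disjointFr Hdis iu).
    exists (mkT v i).
      rewrite inE; apply/existsP; exists i; by rewrite eqxx.
    split; first by right.
    by rewrite mkT_a mkT_b /=; lia.
  exists (mkT u i).
    rewrite inE; apply/existsP; exists i; by rewrite eqxx.
  split; first by left.
  by rewrite mkT_a mkT_b /=; lia.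
- move=> x; rewrite inE => /existsP [i /andP [/eqP -> _]].
  by rewrite mkT_a mkT_b.
Qed.

Lemma P0_col : P0 -> ab_colorable E tau (tau - k).
Proof.
move=> [T [[Hab Hcnt] Hcov Heq]].
pose A v := [set i : 'I_tau | mkT v i \in T].
have HA : forall v, #|A v| <= k.
  move=> v; apply: leq_trans (Hcnt v).
  have inj : injective (mkT v).
    move=> i j /(congr1 (@tr_a V tau)); rewrite !mkT_a => /eqP.
    by rewrite eqSS => /eqP /val_inj.
  rewrite -(card_imset _ inj); apply: subset_leq_card; apply/subsetP => x.
  move=> /imsetP [i]; rewrite inE => Hi ->; by rewrite inE Hi eqxx.
pose B v := ~: A v.
have HB : forall v, tau - k <= #|B v|.
  by move=> v; rewrite cardsCs setCK card_ord; have := HA v; lia.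
exists (fun v => [set x in take (tau - k) (enum (B v))]); split.
- move=> v; rewrite cardsE (card_uniqP (take_uniq _ (enum_uniq _))).
  by rewrite size_takel // -cardE HB.
- move=> u v Huv; rewrite -setI_eq0; apply/eqP/setP => i; rewrite !inE.
  apply/negbTE/andP => -[].
  move=> /mem_take; rewrite mem_enum inE => Hu.
  move=> /mem_take; rewrite mem_enum inE => Hv.
  have ht : 1 <= i.+1 <= tau by rewrite /= ltn_ord.
  have := Hcov _ ht u v; rewrite HEs // => /(_ Huv) [x xT [Hw Ht]].
  have ex : x = mkT (tr_v x) i.
    have := Hab x xT; have := Heq x xT.
    case: x xT Hw Ht => [[w a] b] /= xT Hw Ht.
    rewrite /tr_a /tr_b /mkT /= in Ht * => Hab' _.
    have ha : a = inord i.+1 by apply: val_inj; rewrite /= inordK ?ltnS ?ltn_ord //; lia.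
    have hb : b = inord i.+1 by apply: val_inj; rewrite /= inordK ?ltnS ?ltn_ord //; lia.
    by rewrite ha hb.
  case: Hw => Hw; rewrite -Hw in Hu Hv; rewrite ex in xT.
  + by move: Hu; rewrite inE xT.
  + by move: Hv; rewrite inE xT.
Qed.

End S.

Theorem mainTheorem2 (V : finType) (E : rel V) (Es : nat -> rel V)
  (tau k : nat) :
  irreflexive E -> symmetric E ->
  (forall t, 1 <= t <= tau -> Es t = E) ->
  k <= tau ->
  (MinTimelineInf tau Es k 0 <-> ab_colorable E tau (tau - k)) /\
  (MinTimelinePlus tau Es k 0 <-> ab_colorable E tau (tau - k)).
Proof.
move=> _ _ HEs Hk; split; split.
- move=> [T [Ha Hc H0]]; apply: (P0_col HEs Hk); exists T; split => // x xT.
  have := H0 x xT; have := (proj1 Ha x xT); lia.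
- move=> /(col_P0 HEs Hk) [T [Ha Hc H0]]; exists T; split => // x xT.
  by rewrite H0 ?subnn.
- move=> [T [Ha Hc H0]]; apply: (P0_col HEs Hk); exists T; split => // x xT.
  have : tr_b x - tr_a x <= 0.
    apply: leq_trans H0; by rewrite (bigD1 x) //= leq_addr.
  have := (proj1 Ha x xT); lia.
- move=> /(col_P0 HEs Hk) [T [Ha Hc H0]]; exists T; split => //.
  by rewrite big1 // => x xT; rewrite H0 ?subnn.
Qed.
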